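(* For every $(C,v)\in\mathrm{SO}(3)\times\mathbb{R}$ with $C=(c_{jk})$, $$\rho_1(\mathrm{Id},(C,v))=\rho_2(\mathrm{Id},(\tilde C,v)),\quad \tilde C=\begin{pmatrix}c_{11}\cos v+c_{12}\sin v&c_{12}\cos v-c_{11}\sin v&c_{13}\\ c_{21}\cos v+c_{22}\sin v&c_{22}\cos v-c_{21}\sin v&c_{23}\\ c_{31}\cos v+c_{32}\sin v&c_{32}\cos v-c_{31}\sin v&c_{33}\end{pmatrix}.$$
   Context: $\mathrm{SO}(3)\times\mathbb{R}$ is the group of $4\times4$ matrices $(C,v)=\mathrm{diag}(C,e^v)$, $C\in\mathrm{SO}(3)$, $v\in\mathbb{R}$, with identity $\mathrm{Id}$. Let $E_1=e_{32}-e_{23}$, $E_2=e_{13}-e_{31}$, $E_3=e_{21}-e_{12}$, $E_4=e_{44}$ ($4\times4$ matrix units). $\rho_1$ (resp. $\rho_2$) is the left-invariant sub-Riemannian metric given by the left-invariant distribution with value $\mathrm{span}(E_1,E_4-E_3,E_2)$ (resp. $\mathrm{span}(E_1,E_4,E_2)$) at $\mathrm{Id}$ and the inner product making these three vectors orthonormal. *)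

(* Defs.v *)
From HB Require Import structures.
From mathcomp Require Import all_boot all_order all_algebra.
From mathcomp Require Import all_classical all_reals all_analysis.
Set Implicit Arguments. Unset Strict Implicit. Unset Printing Implicit Defensive.
Import Order.TTheory GRing.Theory Num.Theory.
Import numFieldNormedType.Exports.
Local Open Scope classical_set_scope.
Local Open Scope ring_scope.

Section Defs.
Variable R : realType.

(* 4x4 matrix units (0-indexed): E1 = e32 - e23, E2 = e13 - e31,
   E3 = e21 - e12, E4 = e44. *)
Definition o0 : 'I_4 := inord 0.
Definition o1 : 'I_4 := inord 1.
Definition o2 : 'I_4 := inord 2.
Definition o3 : 'I_4 := inord 3.

Definition E1 : 'M[R]_4 := delta_mx o2 o1 - delta_mx o1 o2.
Definition E2 : 'M[R]_4 := delta_mx o0 o2 - delta_mx o2 o0.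
Definition E3 : 'M[R]_4 := delta_mx o1 o0 - delta_mx o0 o1.
Definition E4 : 'M[R]_4 := delta_mx o3 o3.

Definition SO3 (C : 'M[R]_3) : Prop := C^T *m C = 1%:M /\ \det C = 1.

(* the element (C,v) = diag(C, e^v) of SO(3) x R *)
Definition grp_elt (C : 'M[R]_3) (v : R) : 'M[R]_4 :=
  \matrix_(i < 4, j < 4)
    if (i < 3)%N && (j < 3)%N then C (inord i) (inord j)
    else if (i == 3%N :> nat) && (j == 3%N :> nat) then expR v else 0.

(* A left-invariant sub-Riemannian structure given by an orthonormal frame
   X : 'I_3 -> 'M_4 of the distribution at Id. *)
Definition ctrl_mx (X : 'I_3 -> 'M[R]_4) (u : 'I_3 -> R -> R) (s : R) : 'M[R]_4 :=
  \sum_(k < 3) u k s *: X k.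

(* g : [0,1] -> group is the horizontal trajectory from Id with L^oo control u:
   g(t) = Id + int_0^t g(s) (sum_k u_k(s) X_k) ds  on [0,1]. *)
Local Notation I01 := (`[(0:R), (1:R)]%classic : set R).
Definition admissible (X : 'I_3 -> 'M[R]_4) (u : 'I_3 -> R -> R)
    (g : R -> 'M[R]_4) (target : 'M[R]_4) : Prop :=
  (forall k, measurable_fun I01 (u k)) /\
  (exists M : R, forall k t, t \in `[(0:R), 1] -> `|u k t| <= M) /\
  (forall i j, {within I01, continuous (fun t => g t i j)}) /\
  g 0 = 1%:M /\ g 1 = target /\
  (forall t, t \in `[(0:R), 1] -> forall i j,
     g t i j = (1%:M : 'M[R]_4) i j +
       Rintegral lebesgue_measure (`[(0:R), t]%classic : set R) (fun s => (g s *m ctrl_mx X u s) i j)).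

Definition ctrl_length (u : 'I_3 -> R -> R) : R :=
  Rintegral lebesgue_measure I01
    (fun s => Num.sqrt (\sum_(k < 3) u k s ^+ 2)).

Definition sr_dist (X : 'I_3 -> 'M[R]_4) (target : 'M[R]_4) : R :=
  inf [set l | exists u g, admissible X u g target /\ l = ctrl_length u].

Definition frame1 : 'I_3 -> 'M[R]_4 := fun k =>
  if (k == 0%N :> nat) then E1 else if (k == 1%N :> nat) then E4 - E3 else E2.
Definition frame2 : 'I_3 -> 'M[R]_4 := fun k =>
  if (k == 0%N :> nat) then E1 else if (k == 1%N :> nat) then E4 else E2.

Definition rho1 (target : 'M[R]_4) := sr_dist frame1 target.
Definition rho2 (target : 'M[R]_4) := sr_dist frame2 target.

Definition Ctilde (C : 'M[R]_3) (v : R) : 'M[R]_3 :=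
  \matrix_(i < 3, j < 3)
    if (j == 0%N :> nat) then C i (inord 0) * cos v + C i (inord 1) * sin v
    else if (j == 1%N :> nat) then C i (inord 1) * cos v - C i (inord 0) * sin v
    else C i (inord 2).

End Defs.

(* Main.v *)
Require Import Defs.
From HB Require Import structures.
From mathcomp Require Import all_boot all_order all_algebra.
From mathcomp Require Import all_classical all_reals all_analysis.
From mathcomp Require Import ring lra.
From mathcomp Require Import measurable_realfun ftc.
Set Implicit Arguments. Unset Strict Implicit. Unset Printing Implicit Defensive.
Import Order.TTheory GRing.Theory Num.Theory.
Import numFieldNormedType.Exports.
Local Open Scope classical_set_scope.
Local Open Scope ring_scope.

Section A.
Variable R : realType.

Lemma const_sq (D : R -> R) (C : R) : 0 <= C ->
  (forall s t, 0 <= s -> s <= t -> t <= 1 -> `|D t - D s| <= C * (t - s) ^+ 2) ->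
  forall t, 0 <= t -> t <= 1 -> D t = D 0.
Proof.
move=> C0 HD t t0 t1.
have key : forall n : nat, `|D t - D 0| <= C / n.+1%:R.
  move=> n; set m : R := n.+1%:R.
  have m0 : 0 < m by rewrite /m ltr0n.
  pose x (k : nat) : R := t * k%:R / m.
  have x0 : x 0%N = 0 by rewrite /x mulr0 mul0r.
  have xm : x n.+1 = t by rewrite /x -/m mulfK // gt_eqF.
  have -> : D t - D 0 = \sum_(0 <= k < n.+1) (D (x k.+1) - D (x k)).
    by rewrite telescope_sumr // x0 xm.
  apply: le_trans (ler_norm_sum _ _ _) _.
  rewrite big_mkord.
  apply: (@le_trans _ _ (\sum_(k < n.+1) C * (t / m) ^+ 2)).
    apply: ler_sum => k _.
    have hk := ltn_ord k.
    have xk0 : 0 <= x k by rewrite /x divr_ge0 // mulr_ge0.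
    have xS : x k.+1 - x k = t / m.
      by rewrite /x -mulrBl -mulrBr -natrB // subSnn mulr1.
    rewrite -xS; apply: HD => //; first by rewrite -subr_ge0 xS divr_ge0// ltW.
    rewrite /x ler_pdivrMr // mul1r.
    apply: (@le_trans _ _ (1 * m)); last by rewrite mul1r.
    by apply: ler_pM => //; rewrite /m ler_nat.
  rewrite sumr_const card_ord -mulr_natr.
  rewrite -/m expr2.
  have -> : C * (t / m * (t / m)) * m = C / m * (t * t).
    by field; rewrite gt_eqF.
  rewrite -[leRHS]mulr1; apply: ler_wpM2l; first by rewrite divr_ge0 // ltW.
  by rewrite -[1]mulr1 ler_pM.
apply/eqP; rewrite -subr_eq0 -normr_eq0; apply/eqP.
apply/le_anti; rewrite normr_ge0 andbT.
apply/negPn/negP; rewrite -ltNge => e0.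
set N := Num.truncn (C / `|D t - D 0|).
have H := key N.
have h := truncnS_gt (C / `|D t - D 0|).
rewrite -/N ltr_pdivrMr // in h.
rewrite ler_pdivlMr ?ltr0n // mulrC in H.
by move: (lt_le_trans h H); rewrite ltxx.
Qed.

Local Notation mu := (@lebesgue_measure R).
Definition bnd (f : R -> R) := exists M, forall t, 0 <= t -> t <= 1 -> `|f t| <= M.
Definition bm (f : R -> R) := measurable_fun (`[(0:R), (1:R)]%classic : set R) f /\ bnd f.

Lemma mu01 : mu (`[(0:R), (1:R)]%classic : set R) = 1%E.
Proof. by rewrite lebesgue_measure_itv /= ifT ?lte01 // oppr0 adde0. Qed.

Lemma bm_int f A : bm f -> measurable A -> A `<=` (`[(0:R), (1:R)]%classic : set R) ->
  mu.-integrable A (EFin \o f).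
Proof.
case=> mf [M hM] mA sA; apply: measurable_bounded_integrable => //.
- apply: (@le_lt_trans _ _ (mu `[(0:R), (1:R)]%classic)).
    by apply: le_measure => //; rewrite inE.
  by rewrite mu01 ltry.
- exact: measurable_funS mf.
- exists M; split; first exact: num_real.
  move=> x Mx y /sA; rewrite /= in_itv /= => /andP[y0 y1].
  by apply: le_trans (hM _ y0 y1) (ltW Mx).
Qed.

Lemma mu_oc (s t : R) : s <= t -> fine (mu `]s, t]%classic) = t - s.
Proof.
rewrite lebesgue_measure_itv /= lte_fin le_eqVlt => /predU1P[->|st].
  by rewrite ltxx subrr.
by rewrite st.
Qed.

Lemma Rint_norm f A K : bm f -> measurable A -> A `<=` (`[(0:R), (1:R)]%classic : set R) ->
  (forall r, A r -> `|f r| <= K) ->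
  `|Rintegral mu A f| <= K * fine (mu A).
Proof.
move=> bf mA sA hK.
apply: le_trans (@le_normr_Rintegral _ _ _ mu A f mA (bm_int bf mA sA)) _.
rewrite -(@Rintegral_cst _ _ _ mu A mA).
apply: (@le_Rintegral _ _ _ mu) => //.
- exact: integrable_norm (bm_int bf mA sA).
- apply: bm_int => //; split; first exact: measurable_cst.
  by exists `|K| => * /=.
Qed.

Local Notation I01 := (`[(0:R), (1:R)]%classic : set R).

Lemma sub_oc (s t : R) : 0 <= s -> t <= 1 -> `]s, t]%classic `<=` I01.
Proof.
move=> s0 t1 x /=; rewrite !in_itv /= => /andP[sx xt].
by rewrite (le_trans s0 (ltW sx)) (le_trans xt t1).
Qed.

Lemma sub_cc (s t : R) : 0 <= s -> t <= 1 -> `[s, t]%classic `<=` I01.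
Proof.
move=> s0 t1 x /=; rewrite !in_itv /= => /andP[sx xt].
by rewrite (le_trans s0 sx) (le_trans xt t1).
Qed.

Lemma bm_cont F : {within I01, continuous F} -> bm F.
Proof.
move=> cF; split.
  by apply: subspace_continuous_measurable_fun => //; exact: measurable_itv.
have [cM hcM hM] := EVT_max (@ler01 R) cF.
have [cm hcm hm] := EVT_min (@ler01 R) cF.
exists (`|F cM| + `|F cm|) => t t0 t1.
have tI : t \in `[(0:R), 1] by rewrite in_itv /= t0 t1.
have := hM t tI; have := hm t tI.
case: (lerP 0 (F t)) => ft.
  rewrite ger0_norm // => _ h; apply: (le_trans h).
  by apply: le_trans (ler_norm _) _; rewrite lerDl normr_ge0.
rewrite ltr0_norm // => h _; apply: (@le_trans _ _ (- F cm)); first by rewrite lerN2.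
by apply: le_trans (ler_norm _) _; rewrite normrN lerDr normr_ge0.
Qed.

Lemma bm_cst c : bm (fun _ => c).
Proof. by split; [exact: measurable_cst | exists `|c|]. Qed.

Lemma bmD f g : bm f -> bm g -> bm (fun x => f x + g x).
Proof.
move=> [mf [M1 h1]] [mg [M2 h2]]; split; first exact: measurable_funD.
exists (M1 + M2) => t t0 t1; apply: le_trans (ler_normD _ _) _.
by apply: lerD; [exact: h1 | exact: h2].
Qed.

Lemma bmM f g : bm f -> bm g -> bm (fun x => f x * g x).
Proof.
move=> [mf [M1 h1]] [mg [M2 h2]]; split; first exact: measurable_funM.
exists (M1 * M2) => t t0 t1; rewrite normrM.
by apply: ler_pM => //; [exact: h1 | exact: h2].
Qed.

Lemma bmN f : bm f -> bm (fun x => - f x).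
Proof.
move=> bf; have := bmM (bm_cst (-1)) bf.
by congr bm; apply/funext => x; rewrite mulN1r.
Qed.

Lemma bm_sum (I : Type) (l : seq I) (f : I -> R -> R) :
  (forall i, bm (f i)) -> bm (fun x => \sum_(i <- l) f i x).
Proof.
move=> hf; elim: l => [|i l IH].
  by have := bm_cst 0; congr bm; apply/funext => x; rewrite big_nil.
have := bmD (hf i) IH; congr bm; apply/funext => x; by rewrite big_cons.
Qed.

Definition ode (F f : R -> R) := bm f /\ {within I01, continuous F} /\
  forall t, 0 <= t -> t <= 1 -> F t = F 0 + Rintegral mu `[0, t]%classic f.

Lemma int_diff f s t : bm f -> 0 <= s -> s <= t -> t <= 1 ->
  Rintegral mu `[0, t]%classic f - Rintegral mu `[0, s]%classic f =
  Rintegral mu `]s, t]%classic f.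
Proof.
move=> bf s0 st t1; apply: Rintegral_itvB; rewrite ?bnd_simp //.
apply: bm_int => //; exact: sub_cc.
Qed.

Lemma ode_diff F f s t : ode F f -> 0 <= s -> s <= t -> t <= 1 ->
  F t - F s = Rintegral mu `]s, t]%classic f.
Proof.
move=> [bf [_ hF]] s0 st t1.
rewrite (hF t) ?(le_trans s0 st) // (hF s) ?(le_trans st t1) //.
by rewrite opprD addrACA subrr add0r int_diff.
Qed.

Lemma Rint_oc_bound f s t K : bm f -> 0 <= s -> s <= t -> t <= 1 ->
  (forall r, s < r -> r <= t -> `|f r| <= K) ->
  `|Rintegral mu `]s, t]%classic f| <= K * (t - s).
Proof.
move=> bf s0 st t1 hK; rewrite -mu_oc //.
apply: Rint_norm => //; first exact: sub_oc.
by move=> r /=; rewrite in_itv /= => /andP[]; exact: hK.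
Qed.

Lemma ode_lip F f : ode F f -> exists M, 0 <= M /\
  (forall r, 0 <= r -> r <= 1 -> `|f r| <= M) /\
  (forall s t, 0 <= s -> s <= t -> t <= 1 -> `|F t - F s| <= M * (t - s)).
Proof.
move=> hode; have [[_ [M hM]] _] := hode.
have M0 : 0 <= M by apply: le_trans (hM 0 (lexx _) ler01); exact: normr_ge0.
exists M; split => //; split => // s t s0 st t1.
rewrite (ode_diff hode) //; apply: Rint_oc_bound => //; first by case: hode.
move=> r sr rt; apply: hM; [exact: le_trans s0 (ltW sr) | exact: le_trans rt t1].
Qed.

Lemma ode_bm F f : ode F f -> bm F.
Proof. by case=> _ [cF _]; exact: bm_cont. Qed.

Lemma ode_of_local F f : bm f -> {within I01, continuous F} ->
  (exists C, 0 <= C /\ forall s t, 0 <= s -> s <= t -> t <= 1 ->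
     `|F t - F s - Rintegral mu `]s, t]%classic f| <= C * (t - s) ^+ 2) ->
  ode F f.
Proof.
move=> bf cF [C [C0 hC]]; split => //; split => // t t0 t1.
pose D x := F x - Rintegral mu `[0, x]%classic f.
have := @const_sq D C C0.
have -> : D 0 = F 0.
  by rewrite /D set_itv1 Rintegral_set1 subr0.
move=> h; rewrite -(h _ t) // ?/D ?subrK //.
move=> s x s0 sx x1.
have -> : D x - D s = F x - F s - Rintegral mu `]s, x]%classic f.
  by rewrite -(int_diff bf s0 sx x1) /D; ring.
exact: hC.
Qed.

Lemma deriv_cont (p dp : R -> R) : (forall x : R, is_derive x (1:R) p (dp x)) -> continuous p.
Proof.
move=> h x; apply/differentiable_continuous; rewrite -derivable1_diffP.
exact: (@ex_derive _ _ _ x 1 p (dp x) (h x)).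
Qed.

Lemma lip_deriv (p dp : R -> R) B L : (forall x : R, is_derive x (1:R) p (dp x)) ->
  (forall x, `|x| <= B -> `|dp x| <= L) ->
  forall x y, `|x| <= B -> `|y| <= B -> `|p x - p y| <= L * `|x - y|.
Proof.
move=> hd hL.
have key : forall x y, x <= y -> `|x| <= B -> `|y| <= B -> `|p x - p y| <= L * `|x - y|.
  move=> x y xy xB yB.
  have [c cI hc] := @MVT_segment R p dp x y xy (fun z _ => hd z)
    (continuous_subspaceT (deriv_cont hd)).
  rewrite distrC hc normrM -[`|y - x|]distrC.
  rewrite ler_wpM2r ?normr_ge0 //; apply: hL.
  move: cI; rewrite in_itv /= => /andP[xc cy].
  rewrite ler_norml; move: xB yB; rewrite !ler_norml => /andP[h1 h2] /andP[h3 h4].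
  by rewrite (le_trans h1 xc) (le_trans cy h4).
move=> x y xB yB; case/orP: (le_total x y) => xy; first exact: key xy xB yB.
rewrite distrC [`|x - y|]distrC; exact: key xy yB xB.
Qed.

Lemma taylor_bound (p dp ddp : R -> R) B L : (forall x : R, is_derive x (1:R) p (dp x)) ->
  (forall x : R, is_derive x (1:R) dp (ddp x)) ->
  (forall x, `|x| <= B -> `|ddp x| <= L) ->
  forall x y, `|x| <= B -> `|y| <= B ->
  `|p x - p y - dp y * (x - y)| <= L * (x - y) ^+ 2.
Proof.
move=> hd hdd hL.
have lip := lip_deriv hdd hL.
have key : forall x y, `|x| <= B -> `|y| <= B -> forall c, `|c| <= B ->
    `|c - y| <= `|x - y| -> p x - p y = dp c * (x - y) ->
    `|p x - p y - dp y * (x - y)| <= L * (x - y) ^+ 2.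
  move=> x y xB yB c cB cy ->; rewrite -mulrBl normrM -real_normK ?num_real //.
  rewrite expr2 mulrA ler_wpM2r ?normr_ge0 //.
  apply: le_trans (lip _ _ cB yB) _; rewrite ler_wpM2l //.
  by apply: le_trans (hL _ cB); exact: normr_ge0.
move=> x y xB yB; case/orP: (le_total x y) => xy.
  have [c cI hc] := @MVT_segment R p dp x y xy (fun z _ => hd z)
    (continuous_subspaceT (deriv_cont hd)).
  move: cI; rewrite in_itv /= => /andP[xc cy].
  apply: (key x y xB yB c).
  - rewrite ler_norml; move: xB yB; rewrite !ler_norml => /andP[h1 h2] /andP[h3 h4].
    by rewrite (le_trans h1 xc) (le_trans cy h4).
  - rewrite distrC [`|x - y|]distrC !ger0_norm ?subr_ge0 //.
    by rewrite lerD2l lerN2.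
  - by apply/eqP; rewrite -opprB hc -mulrN opprB.
have [c cI hc] := @MVT_segment R p dp y x xy (fun z _ => hd z)
    (continuous_subspaceT (deriv_cont hd)).
move: cI; rewrite in_itv /= => /andP[yc cx].
apply: (key x y xB yB c).
- rewrite ler_norml; move: xB yB; rewrite !ler_norml => /andP[h1 h2] /andP[h3 h4].
  by rewrite (le_trans h3 yc) (le_trans cx h2).
- by rewrite !ger0_norm ?subr_ge0 // lerD2r.
- exact: hc.
Qed.

Lemma Rint_ocD f g s t : bm f -> bm g -> 0 <= s -> t <= 1 ->
  Rintegral mu `]s, t]%classic (fun r => f r + g r) =
  Rintegral mu `]s, t]%classic f + Rintegral mu `]s, t]%classic g.
Proof.
move=> bf bg s0 t1; apply: (@RintegralD _ _ _ mu) => //;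
  by apply: bm_int => //; exact: sub_oc.
Qed.

Lemma Rint_ocB f g s t : bm f -> bm g -> 0 <= s -> t <= 1 ->
  Rintegral mu `]s, t]%classic (fun r => f r - g r) =
  Rintegral mu `]s, t]%classic f - Rintegral mu `]s, t]%classic g.
Proof.
move=> bf bg s0 t1; apply: (@RintegralB _ _ _ mu) => //;
  by apply: bm_int => //; exact: sub_oc.
Qed.

Lemma Rint_ocZl f c s t : bm f -> 0 <= s -> t <= 1 ->
  Rintegral mu `]s, t]%classic (fun r => c * f r) = c * Rintegral mu `]s, t]%classic f.
Proof.
move=> bf s0 t1; apply: (@RintegralZl _ _ _ mu) => //.
by apply: bm_int => //; exact: sub_oc.
Qed.

Lemma Rint_ocZr f c s t : bm f -> 0 <= s -> t <= 1 ->
  Rintegral mu `]s, t]%classic (fun r => f r * c) = Rintegral mu `]s, t]%classic f * c.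
Proof.
move=> bf s0 t1; apply: (@RintegralZr _ _ _ mu) => //.
by apply: bm_int => //; exact: sub_oc.
Qed.

Lemma ode_prod F f K k : ode F f -> ode K k ->
  ode (fun x => F x * K x) (fun r => f r * K r + F r * k r).
Proof.
move=> oF oK.
have [Mf [Mf0 [hf LF]]] := ode_lip oF.
have [Mk [Mk0 [hk LK]]] := ode_lip oK.
have bf : bm f by case: oF.
have bk : bm k by case: oK.
have bF := ode_bm oF; have bK := ode_bm oK.
have [_ [cF _]] := oF; have [_ [cK _]] := oK.
apply: ode_of_local.
- exact: bmD (bmM bf bK) (bmM bF bk).
- by move=> x; apply: cvgM; [exact: cF | exact: cK].
exists (Mf * Mk + Mf * Mk); split; first by rewrite addr_ge0 // mulr_ge0.
move=> s t s0 st t1.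
pose e r := f r * (K t - K r) + (F s - F r) * k r.
have be : bm e.
  apply: bmD; first by apply: bmM => //; apply: bmD (bm_cst _) (bmN bK).
  by apply: bmM => //; apply: bmD (bm_cst _) (bmN bF).
have bp : bm (fun r => f r * K r + F r * k r) by exact: bmD (bmM bf bK) (bmM bF bk).
have -> : F t * K t - F s * K s -
    Rintegral mu `]s, t]%classic (fun r => f r * K r + F r * k r) =
    Rintegral mu `]s, t]%classic e.
  apply/eqP; rewrite subr_eq -Rint_ocD //.
  have -> : (fun r => e r + (f r * K r + F r * k r)) =
     (fun r => f r * K t + F s * k r).
    by apply/funext => r; rewrite /e; ring.
  rewrite Rint_ocD //; first last.
  - exact: bmM (bm_cst _) bk.
  - exact: bmM bf (bm_cst _).
  rewrite Rint_ocZr // Rint_ocZl // -(ode_diff oF s0 st t1) -(ode_diff oK s0 st t1).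
  by apply/eqP; ring.
rewrite expr2 mulrA.
apply: Rint_oc_bound => // r sr rt.
have r0 : 0 <= r by exact: le_trans s0 (ltW sr).
have r1 : r <= 1 by exact: le_trans rt t1.
rewrite /e [X in _ <= X]mulrDl; apply: le_trans (ler_normD _ _) _; rewrite !normrM.
apply: lerD.
  rewrite -mulrA; apply: ler_pM => //; first exact: hf.
  apply: le_trans (LK _ _ r0 rt t1) _; rewrite ler_wpM2l //.
  by rewrite lerD2l lerN2 ltW.
rewrite [X in X <= _]mulrC (mulrC Mf) -mulrA; apply: ler_pM => //; first exact: hk.
rewrite distrC; apply: le_trans (LF _ _ s0 (ltW sr) r1) _.
by rewrite ler_wpM2l // lerD2r.
Qed.

Lemma ode_cst c : ode (fun _ => c) (fun _ => 0).
Proof.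
split; first exact: bm_cst.
split; first by move=> x; exact: cvg_cst.
move=> t t0 t1; rewrite (@Rintegral_cst _ _ _ mu) ?mul0r ?addr0 //.
Qed.

Lemma ode_add F f G g : ode F f -> ode G g ->
  ode (fun x => F x + G x) (fun x => f x + g x).
Proof.
move=> [bf [cF hF]] [bg [cG hG]]; split; first exact: bmD.
split; first by move=> x; apply: cvgD; [exact: cF | exact: cG].
move=> t t0 t1; rewrite hF // hG // (@RintegralD _ _ _ mu) //; first last.
- by apply: bm_int => //; exact: sub_cc.
- by apply: bm_int => //; exact: sub_cc.
by rewrite hF ?lexx ?ler01 // hG ?lexx ?ler01 // set_itv1 !Rintegral_set1 !addr0 addrACA.
Qed.

Lemma ode_scale c F f : ode F f -> ode (fun x => c * F x) (fun x => c * f x).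
Proof.
move=> [bf [cF hF]]; split; first exact: bmM (bm_cst _) bf.
split; first by move=> x; apply: cvgM; [exact: cvg_cst | exact: cF].
move=> t t0 t1; rewrite hF // (@RintegralZl _ _ _ mu) //; first last.
- by apply: bm_int => //; exact: sub_cc.
by rewrite hF ?lexx ?ler01 // set_itv1 !Rintegral_set1 !addr0 mulrDr.
Qed.

Lemma ode_sum (I : Type) (l : seq I) (F f : I -> R -> R) :
  (forall i, ode (F i) (f i)) ->
  ode (fun x => \sum_(i <- l) F i x) (fun x => \sum_(i <- l) f i x).
Proof.
move=> hF; elim: l => [|i l IH].
  have := ode_cst 0; congr ode; apply/funext => x; by rewrite big_nil.
have := ode_add (hF i) IH; congr ode; apply/funext => x; by rewrite big_cons.
Qed.

Lemma ode_chain F f (p dp ddp : R -> R) B L : ode F f ->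
  (forall x : R, is_derive x (1:R) p (dp x)) ->
  (forall x : R, is_derive x (1:R) dp (ddp x)) ->
  (forall t, 0 <= t -> t <= 1 -> `|F t| <= B) ->
  (forall x, `|x| <= B -> `|ddp x| <= L) ->
  ode (fun x => p (F x)) (fun r => dp (F r) * f r).
Proof.
move=> oF hd hdd hB hL.
have [M [M0 [hf LF]]] := ode_lip oF.
have bf : bm f by case: oF.
have [_ [cF _]] := oF.
have cpF : {within I01, continuous (fun x => p (F x))}.
  move=> x; apply: continuous_comp; first exact: cF.
  exact: (@deriv_cont _ _ hd (F x)).
have cdpF : {within I01, continuous (fun x => dp (F x))}.
  move=> x; apply: continuous_comp; first exact: cF.
  exact: (@deriv_cont _ _ hdd (F x)).
have bdpF := bm_cont cdpF.
have L0 : 0 <= L.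
  apply: le_trans (hL (F 0) _); [exact: normr_ge0 | exact: hB (lexx _) ler01].
apply: ode_of_local => //; first exact: bmM.
exists (L * M ^+ 2 + L * M * M); split.
  by rewrite addr_ge0 // ?mulr_ge0 // exprn_ge0.
move=> s t s0 st t1.
have s1 : s <= 1 by exact: le_trans st t1.
have t0 : 0 <= t by exact: le_trans s0 st.
pose e r := (dp (F s) - dp (F r)) * f r.
have be : bm e by apply: bmM => //; apply: bmD (bm_cst _) (bmN bdpF).
have -> : p (F t) - p (F s) - Rintegral mu `]s, t]%classic (fun r => dp (F r) * f r)
   = (p (F t) - p (F s) - dp (F s) * (F t - F s)) + Rintegral mu `]s, t]%classic e.
  have -> : e = (fun r => dp (F s) * f r - dp (F r) * f r).
    by apply/funext => r; rewrite /e mulrBl.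
  rewrite Rint_ocB //; first last.
  - exact: bmM.
  - exact: bmM (bm_cst _) bf.
  rewrite Rint_ocZl // -(ode_diff oF s0 st t1); ring.
rewrite mulrDl; apply: le_trans (ler_normD _ _) _; apply: lerD.
  apply: le_trans (taylor_bound hd hdd hL (hB _ t0 t1) (hB _ s0 s1)) _.
  rewrite -mulrA ler_wpM2l // -[X in X <= _]real_normK ?num_real //.
  rewrite -exprMn; apply: lerXn2r; rewrite ?nnegrE ?normr_ge0 ?mulr_ge0 ?subr_ge0 //.
  exact: LF.
rewrite expr2 !mulrA; apply: Rint_oc_bound => // r sr rt.
have r0 : 0 <= r by exact: le_trans s0 (ltW sr).
have r1 : r <= 1 by exact: le_trans rt t1.
rewrite /e normrM (_ : L * M * M * (t - s) = L * M * (t - s) * M); last by ring.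
apply: ler_pM => //; last exact: hf.
apply: le_trans (lip_deriv hdd hL (hB _ s0 s1) (hB _ r0 r1)) _.
rewrite -mulrA ler_wpM2l // distrC; apply: le_trans (LF _ _ s0 (ltW sr) r1) _.
by rewrite ler_wpM2l // lerD2r.
Qed.

End A.

Section M.
Variable R : realType.
Lemma ordE (i : 'I_4) : exists2 n, (n < 4)%N & i = inord n.
Proof. by exists (val i); rewrite ?ltn_ord ?inord_val. Qed.

Lemma E1E (i j : 'I_4) : E1 R i j = if ((i:nat) == 2%N) && ((j:nat) == 1%N) then 1 else if ((i:nat) == 1%N) && ((j:nat) == 2%N) then -1 else 0.
Proof.
rewrite /E1 !mxE /o1 /o2 -!val_eqE /= !inordK //.
case: i => [[|[|[|[|?]]]] ?] //=; case: j => [[|[|[|[|?]]]] ?] //=; rewrite ?subr0 ?sub0r //.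
Qed.
Definition rotf (th : R) (i j : nat) : R :=
  if (i == 0%N) && (j == 0%N) then cos th
  else if (i == 0%N) && (j == 1%N) then - sin th
  else if (i == 1%N) && (j == 0%N) then sin th
  else if (i == 1%N) && (j == 1%N) then cos th
  else if i == j then 1 else 0.
Definition rot4 th : 'M[R]_4 := \matrix_(i, j) rotf th i j.
Definition rot3 th : 'M[R]_3 := \matrix_(i, j) rotf th i j.

Ltac ord_cases i := case: i => [[|[|[|[|?]]]] ?] //=.

Lemma rot4K th : rot4 th *m rot4 (- th) = 1%:M.
Proof.
apply/matrixP => i j; rewrite !mxE !big_ord_recl !big_ord0 !mxE /rotf /= cosN sinN.
ord_cases i; ord_cases j; rewrite ?mulr1n ?mulr0n;
  first [ring | rewrite -(cos2Dsin2 th); ring].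
Qed.
Lemma E2E (i j : 'I_4) : E2 R i j = if ((i:nat) == 0%N) && ((j:nat) == 2%N) then 1 else if ((i:nat) == 2%N) && ((j:nat) == 0%N) then -1 else 0.
Proof.
rewrite /E2 !mxE /o0 /o2 -!val_eqE /= !inordK //.
case: i => [[|[|[|[|?]]]] ?] //=; case: j => [[|[|[|[|?]]]] ?] //=; rewrite ?subr0 ?sub0r //.
Qed.
Lemma E3E (i j : 'I_4) : E3 R i j = if ((i:nat) == 1%N) && ((j:nat) == 0%N) then 1 else if ((i:nat) == 0%N) && ((j:nat) == 1%N) then -1 else 0.
Proof.
rewrite /E3 !mxE /o0 /o1 -!val_eqE /= !inordK //.
case: i => [[|[|[|[|?]]]] ?] //=; case: j => [[|[|[|[|?]]]] ?] //=; rewrite ?subr0 ?sub0r //.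
Qed.
Lemma E4E (i j : 'I_4) : E4 R i j = if ((i:nat) == 3%N) && ((j:nat) == 3%N) then 1 else 0.
Proof.
rewrite /E4 !mxE /o3 -!val_eqE /= !inordK //.
case: i => [[|[|[|[|?]]]] ?] //=; case: j => [[|[|[|[|?]]]] ?] //=.
Qed.


Definition E1f (i j : nat) : R := if (i == 2%N) && (j == 1%N) then 1 else if (i == 1%N) && (j == 2%N) then -1 else 0.
Definition E2f (i j : nat) : R := if (i == 0%N) && (j == 2%N) then 1 else if (i == 2%N) && (j == 0%N) then -1 else 0.
Definition E3f (i j : nat) : R := if (i == 1%N) && (j == 0%N) then 1 else if (i == 0%N) && (j == 1%N) then -1 else 0.
Definition E4f (i j : nat) : R := if (i == 3%N) && (j == 3%N) then 1 else 0.
Lemma E1M : E1 R = \matrix_(i, j) E1f i j.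
Proof. by apply/matrixP => i j; rewrite E1E mxE. Qed.
Lemma E2M : E2 R = \matrix_(i, j) E2f i j.
Proof. by apply/matrixP => i j; rewrite E2E mxE. Qed.
Lemma E3M : E3 R = \matrix_(i, j) E3f i j.
Proof. by apply/matrixP => i j; rewrite E3E mxE. Qed.
Lemma E4M : E4 R = \matrix_(i, j) E4f i j.
Proof. by apply/matrixP => i j; rewrite E4E mxE. Qed.

Lemma E3rot th : E3 R *m rot4 th = rot4 th *m E3 R.
Proof.
rewrite E3M; apply/matrixP => i j; rewrite !mxE !big_ord_recl !big_ord0 !mxE /E3f /rotf /=.
ord_cases i; ord_cases j; ring.
Qed.

Lemma E4rot th : E4 R *m rot4 th = rot4 th *m E4 R.
Proof.
rewrite E4M; apply/matrixP => i j; rewrite !mxE !big_ord_recl !big_ord0 !mxE /E4f /rotf /=.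
ord_cases i; ord_cases j; ring.
Qed.

Lemma conj_rot th p w : rot4 (- th) *m (p *: E1 R + w *: E2 R) *m rot4 th =
  (p * cos th + w * sin th) *: E1 R + (w * cos th - p * sin th) *: E2 R.
Proof.
rewrite E1M E2M; apply/matrixP => i j; rewrite !mxE !big_ord_recl !big_ord0 !mxE.
rewrite ?big_ord_recl !big_ord0 !mxE /E1f /E2f /rotf /= cosN sinN.
ord_cases i; ord_cases j; ring.
Qed.

Lemma rot4_0 : rot4 0 = 1%:M.
Proof.
apply/matrixP => i j; rewrite !mxE /rotf cos0 sin0 oppr0.
ord_cases i; ord_cases j; rewrite ?mulr1n ?mulr0n.
Qed.

Lemma rot3K th : rot3 th *m rot3 (- th) = 1%:M.
Proof.
apply/matrixP => i j; rewrite !mxE !big_ord_recl !big_ord0 !mxE /rotf /= cosN sinN.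
case: i => [[|[|[|?]]] ?] //=; case: j => [[|[|[|?]]] ?] //=; rewrite ?mulr1n ?mulr0n;
  first [ring | rewrite -(cos2Dsin2 th); ring].
Qed.

Lemma l3_2 : (lift ord0 (lift ord0 ord0) : 'I_3) = inord 2.
Proof. by apply: val_inj; rewrite /= inordK. Qed.
Lemma l3_1 : (lift ord0 ord0 : 'I_3) = inord 1.
Proof. by apply: val_inj; rewrite /= inordK. Qed.
Lemma l3_0 : (ord0 : 'I_3) = inord 0.
Proof. by apply: val_inj; rewrite /= inordK. Qed.

Lemma Ctilde_rot (C : 'M[R]_3) v : Ctilde C v = C *m rot3 v.
Proof.
apply/matrixP => i j; rewrite !mxE !big_ord_recl !big_ord0 !mxE /rotf /=.
rewrite l3_2 l3_1 l3_0.
case: j => [[|[|[|?]]] ?] //=; ring.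
Qed.

Lemma grp_rot (C : 'M[R]_3) v th : grp_elt C v *m rot4 th = grp_elt (C *m rot3 th) v.
Proof.
apply/matrixP => i j; rewrite !mxE !big_ord_recl !big_ord0 !mxE /rotf /=.
ord_cases i; ord_cases j; rewrite ?mxE ?big_ord_recl ?big_ord0 ?mxE /bump /= ?l3_2 ?l3_1 ?l3_0 /rotf ?inordK //=; ring.
Qed.


Lemma l4_3 : (lift ord0 (lift ord0 (lift ord0 ord0)) : 'I_4) = inord 3.
Proof. by apply: val_inj; rewrite /= inordK. Qed.

Definition drotf (th : R) (i j : nat) : R :=
  if (i == 0%N) && (j == 0%N) then - sin th
  else if (i == 0%N) && (j == 1%N) then - cos th
  else if (i == 1%N) && (j == 0%N) then cos th
  else if (i == 1%N) && (j == 1%N) then - sin th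
  else 0.

Lemma E3rotM th : E3 R *m rot4 th = \matrix_(i, j) drotf th i j.
Proof.
rewrite E3M; apply/matrixP => i j; rewrite !mxE !big_ord_recl !big_ord0 !mxE /E3f /rotf /drotf /=.
ord_cases i; ord_cases j; ring.
Qed.

Lemma bm_comp (p : R -> R) F : continuous p ->
  {within (`[(0:R), (1:R)]%classic : set R), continuous F} -> bm (fun x => p (F x)).
Proof.
move=> cp cF; apply: bm_cont => x; apply: continuous_comp; [exact: cF | exact: cp].
Qed.

Lemma ode_rot F f k j : ode F f ->
  ode (fun t => rot4 (F t) k j) (fun r => f r * (E3 R *m rot4 (F r)) k j).
Proof.
move=> oF.
have [B hB] := (ode_bm oF).2.
have hc : ode (fun x => cos (F x)) (fun r => - sin (F r) * f r).
  apply: (@ode_chain _ F f cos (fun x => - sin x) (fun x => - cos x) B 1) => //.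
  - by move=> x _; rewrite normrN cos_max.
have hs : ode (fun x => sin (F x)) (fun r => cos (F r) * f r).
  apply: (@ode_chain _ F f sin cos (fun x => - sin x) B 1) => //.
  by move=> x _; rewrite normrN sin_max.
have hms := ode_scale (-1) hs.
have h1 := @ode_cst R 1.
have h0 := @ode_cst R 0.
rewrite (_ : (fun t => rot4 (F t) k j) = fun t => rotf (F t) k j); last first.
  by apply/funext => t; rewrite mxE.
rewrite (_ : (fun r => f r * (E3 R *m rot4 (F r)) k j) = fun r => f r * drotf (F r) k j); last first.
  by apply/funext => r; rewrite E3rotM mxE.
ord_cases k; ord_cases j; rewrite /rotf /drotf /=;
  first [ by move: hc; congr ode; apply/funext => ?; ring
        | by move: hs; congr ode; apply/funext => ?; ring
        | by move: hms; congr ode; apply/funext => ?; ring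
        | by move: h1; congr ode; apply/funext => ?; ring
        | by move: h0; congr ode; apply/funext => ?; ring ].
Qed.

Definition frameA (a : R) : 'I_3 -> 'M[R]_4 := fun k =>
  if (k == 0%N :> nat) then E1 R else if (k == 1%N :> nat) then E4 R + a *: E3 R else E2 R.

Lemma frame1A : frame1 R = frameA (-1).
Proof. by apply/funext => k; rewrite /frame1 /frameA scaleN1r. Qed.
Lemma frame2A : frame2 R = frameA 0.
Proof. by apply/funext => k; rewrite /frame2 /frameA scale0r addr0. Qed.

Local Notation k0 := (inord 0 : 'I_3).
Local Notation k1 := (inord 1 : 'I_3).
Local Notation k2 := (inord 2 : 'I_3).

Lemma ctrlA a u r : ctrl_mx (frameA a) u r =
  (u k0 r *: E1 R + u k2 r *: E2 R) + u k1 r *: E4 R + (u k1 r * a) *: E3 R.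
Proof.
rewrite /ctrl_mx !big_ord_recl big_ord0 /frameA /= l3_2 l3_1 l3_0.
by apply/matrixP => i j; rewrite !mxE; ring.
Qed.

Definition wfun (u : 'I_3 -> R -> R) (th : R -> R) : 'I_3 -> R -> R := fun k r =>
  if (k == 0%N :> nat) then u k0 r * cos (th r) + u k2 r * sin (th r)
  else if (k == 1%N :> nat) then u k1 r
  else u k2 r * cos (th r) - u k0 r * sin (th r).

Lemma w0E u th r : wfun u th k0 r = u k0 r * cos (th r) + u k2 r * sin (th r).
Proof. by rewrite /wfun inordK. Qed.
Lemma w1E u th r : wfun u th k1 r = u k1 r.
Proof. by rewrite /wfun inordK. Qed.
Lemma w2E u th r : wfun u th k2 r = u k2 r * cos (th r) - u k0 r * sin (th r).
Proof. by rewrite /wfun inordK. Qed.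

Lemma KI a b u th r :
  ctrl_mx (frameA a) u r *m rot4 (th r) + (b * u k1 r) *: (E3 R *m rot4 (th r)) =
  rot4 (th r) *m ctrl_mx (frameA (a + b)) (wfun u th) r.
Proof.
have c := conj_rot (th r) (u k0 r) (u k2 r).
have e3 := E3rot (th r); have e4 := E4rot (th r); have nk := rot4K (th r).
rewrite !ctrlA w0E w1E w2E.
move: c e3 e4 nk; move: (E1 R) (E2 R) (E3 R) (E4 R) (rot4 (th r)) (rot4 (- th r)).
move=> E1' E2' E3' E4' N NT c e3 e4 nk.
rewrite mulmxDr mulmxDr -c !mulmxA nk mul1mx -!scalemxAr -e4 -e3 !mulmxDl -!scalemxAl.
by apply/matrixP => i j; rewrite !mxE; ring.
Qed.

Lemma sq_rot p q w c s : c ^+ 2 + s ^+ 2 = 1 ->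
  (p * c + w * s) ^+ 2 + (q ^+ 2 + ((w * c - p * s) ^+ 2 + 0)) =
  p ^+ 2 + (q ^+ 2 + (w ^+ 2 + 0)) :> R.
Proof.
move=> h; transitivity ((p ^+ 2 + w ^+ 2) * (c ^+ 2 + s ^+ 2) + q ^+ 2); first ring.
by rewrite h; ring.
Qed.

Local Notation mu := (@lebesgue_measure R).

Lemma transfer a b u g C C' v :
  admissible (frameA a) u g (grp_elt C v) -> C *m rot3 (b * v) = C' ->
  exists w h, admissible (frameA (a + b)) w h (grp_elt C' v) /\ ctrl_length w = ctrl_length u.
Proof.
move=> [mu_ [[M hM] [cg [g0 [g1 hg]]]]] hC.
have bu : forall k, bm (u k).
  move=> k; split; first exact: mu_.
  by exists M => t t0 t1; apply: hM; rewrite in_itv /= t0 t1.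
pose A r := ctrl_mx (frameA a) u r.
have og : forall i j, ode (fun t => g t i j) (fun r => (g r *m A r) i j).
  move=> i j; split.
    have -> : (fun r => (g r *m A r) i j) =
        (fun r => \sum_(k < 4) g r i k * \sum_(l < 3) u l r * frameA a l k j).
      apply/funext => r; rewrite mxE; apply: eq_bigr => k _.
      rewrite /A /ctrl_mx summxE; congr (_ * _); apply: eq_bigr => l _.
      by rewrite mxE.
    apply: bm_sum => k; apply: bmM; first exact: bm_cont (cg i k).
    by apply: bm_sum => l; exact: bmM (bu l) (bm_cst _).
  split; first exact: cg.
  by move=> t t0 t1; rewrite g0 hg // in_itv /= t0 t1.
pose phi t := Rintegral mu `[0, t]%classic (u k1).
have phi0 : phi 0 = 0 by rewrite /phi set_itv1 Rintegral_set1.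
have ophi : ode phi (u k1).
  split; first exact: bu.
  split; last by move=> t t0 t1; rewrite phi0 add0r.
  exact: (@parameterized_integral_continuous R 0 1 (u k1) ler01
     (bm_int (bu k1) (measurable_itv _) (sub_cc (lexx 0) (lexx 1)))).
pose th t := b * phi t.
have oth : ode th (fun r => b * u k1 r) := ode_scale b ophi.
have cth : {within (`[(0:R), (1:R)]%classic : set R), continuous th} by case: oth => _ [].
pose N t := rot4 (th t).
have oN : forall k j, ode (fun t => N t k j) (fun r => b * u k1 r * (E3 R *m N r) k j).
  by move=> k j; exact: ode_rot.
pose h t := g t *m N t.
pose w := wfun u th.
have oh : forall i j, ode (fun t => h t i j)
    (fun r => (h r *m ctrl_mx (frameA (a + b)) w r) i j).
  move=> i j.
  have := ode_sum (index_enum 'I_4) (fun k => ode_prod (og i k) (oN k j)).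
  congr ode; first by apply/funext => t; rewrite /h mxE.
  apply/funext => r.
  rewrite /h -mulmxA -KI mulmxDr mulmxA [RHS]mxE !mxE -big_split /=.
  by apply: eq_bigr => k _; rewrite !mxE.
have phi1 : phi 1 = v.
  have oF := ode_scale (-1) ophi.
  have [B hB] := (ode_bm oF).2.
  have oE : ode (fun x => expR (-1 * phi x)) (fun r => expR (-1 * phi r) * (-1 * u k1 r)).
    apply: (@ode_chain _ _ _ expR expR expR B (expR B)) => //.
    move=> x xB; rewrite ger0_norm ?expR_ge0 // ler_expR.
    exact: le_trans (ler_norm x) xB.
  have oD := ode_prod (og o3 o3) oE.
  have gA33 : forall r, (g r *m A r) o3 o3 = g r o3 o3 * u k1 r.
    move=> r; rewrite /A ctrlA E1M E2M E3M E4M.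
    rewrite !mxE !big_ord_recl !big_ord0 !mxE /E1f /E2f /E3f /E4f /o3 ?inordK //=.
    rewrite l4_3; ring.
  have [_ [_ eD]] := oD.
  have := eD 1 ler01 (lexx 1).
  rewrite (_ : (fun r => (g r *m A r) o3 o3 * expR (-1 * phi r) +
      g r o3 o3 * (expR (-1 * phi r) * (-1 * u k1 r))) = fun _ => 0); last first.
    by apply/funext => r; rewrite gA33; ring.
  rewrite (@Rintegral_cst _ _ _ mu) ?mul0r ?addr0 //.
  rewrite g0 g1 phi0 mulr0 expR0 mulr1 /grp_elt !mxE /o3 inordK //= eqxx mulr1n.
  rewrite -expRD => HH.
  have : v + -1 * phi 1 = 0 by apply: expR_inj; rewrite HH expR0.
  by rewrite mulN1r => /eqP; rewrite subr_eq0 => /eqP ->.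
have h0 : h 0 = 1%:M by rewrite /h g0 /N /th phi0 mulr0 rot4_0 mulmx1.
have h1 : h 1 = grp_elt C' v by rewrite /h g1 /N /th phi1 grp_rot hC.
have bc : bm (fun x => cos (th x)) by apply: bm_comp => //; exact: continuous_cos.
have bs : bm (fun x => sin (th x)) by apply: bm_comp => //; exact: continuous_sin.
have bW0 : bm (fun r => u k0 r * cos (th r) + u k2 r * sin (th r)).
  by apply: bmD; apply: bmM.
have bW2 : bm (fun r => u k2 r * cos (th r) - u k0 r * sin (th r)).
  by apply: bmD; [apply: bmM | apply: bmN; apply: bmM].
have bw : forall k, bm (w k).
  move=> k; rewrite /w /wfun; case: ((k:nat) == 0%N); first exact: bW0.
  by case: ((k:nat) == 1%N); [exact: bu | exact: bW2].
have [M0 hM0] := bW0.2.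
have [M1 hM1] := (bu k1).2.
have [M2 hM2] := bW2.2.
have M0p : 0 <= M0 by apply: le_trans (hM0 0 (lexx _) ler01); exact: normr_ge0.
have M1p : 0 <= M1 by apply: le_trans (hM1 0 (lexx _) ler01); exact: normr_ge0.
have M2p : 0 <= M2 by apply: le_trans (hM2 0 (lexx _) ler01); exact: normr_ge0.
exists w, h; split.
  split; first by move=> k; exact: (bw k).1.
  split.
    exists (M0 + M1 + M2) => k t; rewrite in_itv /= => /andP[t0 t1].
    rewrite /w /wfun; case: ifP => _.
      by apply: le_trans (hM0 _ t0 t1) (ler_wpDr M2p (ler_wpDr M1p (lexx M0))).
    case: ifP => _.
      by apply: le_trans (hM1 _ t0 t1) (ler_wpDr M2p (ler_wpDl M0p (lexx M1))).
    by apply: le_trans (hM2 _ t0 t1) (ler_wpDl (addr_ge0 M0p M1p) (lexx M2)).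
  split; first by move=> i j; case: (oh i j) => _ [].
  split; first exact: h0.
  split; first exact: h1.
  move=> t; rewrite in_itv /= => /andP[t0 t1] i j.
  by have [_ [_ e]] := oh i j; rewrite e // h0.
rewrite /ctrl_length; congr Rintegral; apply/funext => r; congr Num.sqrt.
rewrite !big_ord_recl !big_ord0 l3_2 l3_1 l3_0 /w w0E w1E w2E.
exact: sq_rot (cos2Dsin2 _).
Qed.

End M.

Theorem proposition14 (R : realType) (C : 'M[R]_3) (v : R) :
  SO3 C -> rho1 (grp_elt C v) = rho2 (grp_elt (Ctilde C v) v).
Proof.
move=> _; rewrite /rho1 /rho2 /sr_dist frame1A frame2A; apply: (congr1 inf).
apply/seteqP; split => l [u [g [adm ->]]].
  have hC : C *m rot3 (1 * v) = Ctilde C v by rewrite mul1r Ctilde_rot.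
  have [w [h [adm' hl]]] := transfer adm hC.
  have e : (-1 + 1 : R) = 0 := addNr 1.
  rewrite e in adm'.
  exists w, h; split; [exact: adm' | by rewrite hl].
have hC : Ctilde C v *m rot3 (-1 * v) = C.
  by rewrite Ctilde_rot -mulmxA mulN1r rot3K mulmx1.
have [w [h [adm' hl]]] := transfer adm hC.
have e : (0 + -1 : R) = -1 := add0r (-1).
rewrite e in adm'.
exists w, h; split; [exact: adm' | by rewrite hl].
Qed.
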